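(* Let $n\ge 2$, let $A$ be a Hermitian matrix of order $n$ and let $\mathcal{O}\in\mathcal{C}_c^{(n)}$. Suppose $A'$ is obtained from $A$ by applying one cycle ($N=n(n-1)/2$ steps) of the cyclic complex Jacobi method defined by the strategy $I_{\mathcal{O}}$. If all rotation angles satisfy $|\cos\phi_k|\ge\nu>0$, $k\ge 0$, then there is a constant $\gamma_{n,\nu}$ depending only on $n$ and $\nu$ such that $$S^2(A')\le\gamma_{n,\nu}S^2(A),\qquad 0\le\gamma_{n,\nu}<1.$$
   Context: $\imath=\sqrt{-1}$. For $1\le i<j\le n$ and real $\phi,\alpha$, $R(i,j,\phi,\alpha)$ is the $n\times n$ matrix equal to $I_n$ except for entries $(i,i)=(j,j)=\cos\phi$, $(i,j)=-e^{\imath\alpha}\sin\phi$, $(j,i)=e^{-\imath\alpha}\sin\phi$. The off-norm is $S(X)=\|X-\mathrm{diag}(X)\|_F$. The complex Jacobi method on a Hermitian $A$ is the iteration $A^{(0)}=A$, $A^{(k+1)}=U_k^*A^{(k)}U_k$, where $U_k=R(i_k,j_k,\phi_k,\alpha_k)$ and the angles $\phi_k,\alpha_k$ are chosen so that the pivot entry in position $(i_k,j_k)$ (and hence $(j_k,i_k)$) of $A^{(k+1)}$ is zero. Let $\mathcal{P}_n=\{(r,s):1\le r<s\le n\}$ and $N=n(n-1)/2$. For an ordering $\mathcal{O}=(i_0,j_0),\dots,(i_{N-1},j_{N-1})$ of $\mathcal{P}_n$ (each pair appearing exactly once), the cyclic strategy $I_{\mathcal{O}}$ takes as $k$-th pivot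 pair $(i_{k\bmod N},j_{k\bmod N})$; one cycle consists of $N$ consecutive steps. $\mathcal{C}_c^{(n)}$ (column-wise orderings with permutations) is the set of orderings of the form $(1,2),(\tau_3(1),3),(\tau_3(2),3),\dots,(\tau_n(1),n),\dots,(\tau_n(n-1),n)$, where each $\tau_j$ is a permutation of $\{1,\dots,j-1\}$, $3\le j\le n$. *)

(* Defs.v *)
From HB Require Import structures.
From mathcomp Require Import all_boot all_order all_algebra all_fingroup.
From mathcomp Require Import complex.
From mathcomp Require Import reals trigo.
Set Implicit Arguments. Unset Strict Implicit. Unset Printing Implicit Defensive.
Import Order.TTheory GRing.Theory Num.Theory.
Local Open Scope ring_scope.

Section Jacobi.
Variable R : realType.
Local Notation C := (complex R).

Definition cR (x : R) : C := Complex x 0.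
Definition cexpi (a : R) : C := Complex (cos a) (sin a).
Definition cabs2 (z : C) : R := let: Complex a b := z in a ^+ 2 + b ^+ 2.

Definition ctrmx n (X : 'M[C]_n) : 'M[C]_n := (map_mx (@conjc R) X)^T.
Definition is_hermitian n (X : 'M[C]_n) : Prop := ctrmx X = X.

Definition offnorm n (X : 'M[C]_n) : R :=
  Num.sqrt (\sum_(r < n) \sum_(s < n | r != s) cabs2 (X r s)).

(* complex plane rotation R(i,j,phi,alpha), indices 0-based (i < j) *)
Definition rot n (i j : nat) (phi alpha : R) : 'M[C]_n :=
  \matrix_(r, s)
    if r == s then (if ((r : nat) == i) || ((r : nat) == j) then cR (cos phi) else 1)
    else if ((r : nat) == i) && ((s : nat) == j) then - (cexpi alpha * cR (sin phi))
    else if ((r : nat) == j) && ((s : nat) == i) then cexpi (- alpha) * cR (sin phi)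
    else 0.
End Jacobi.

(* Column-wise ordering with permutations (0-based):
   for columns j = 1, ..., n-1 the pairs (tau_j(0), j), ..., (tau_j(j-1), j),
   with tau_j a permutation of {0,...,j-1}. *)
Definition colperm_ordering (n : nat) (tau : forall j : nat, 'S_j)
  : seq (nat * nat) :=
  flatten [seq [seq ((tau j i : nat), j) | i <- enum 'I_j] | j <- iota 1 n.-1].

Definition in_Cc (n : nat) (O : seq (nat * nat)) : Prop :=
  exists tau : forall j : nat, 'S_j, O = colperm_ordering n tau.

Definition jacobi_cycle (R : realType) (n : nat) (O : seq (nat * nat))
  (A : 'M[complex R]_n) (phi alpha : nat -> R) (As : nat -> 'M[complex R]_n) : Prop :=
  let N := (n * n.-1)./2 in
  As 0%N = A /\
  forall k : nat, (k < N)%N ->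
    let p := nth (0%N, 0%N) O (k %% N) in
    let U := rot n p.1 p.2 (phi k) (alpha k) in
    As k.+1 = ctrmx U *m As k *m U /\
    (forall (r s : 'I_n), (r : nat) = p.1 -> (s : nat) = p.2 -> As k.+1 r s = 0).

(* Main.v *)
Require Import Defs.
From HB Require Import structures.
From mathcomp Require Import all_boot all_order all_algebra all_fingroup.
From mathcomp Require Import complex.
From mathcomp Require Import reals trigo.
From mathcomp Require Import ring lra zify.
Set Implicit Arguments. Unset Strict Implicit. Unset Printing Implicit Defensive.
Import Order.TTheory GRing.Theory Num.Theory.
Local Open Scope ring_scope.


Section Aux.
Variable R : realType.
Local Notation C := (complex R).

Lemma cabs2_ge0 (z : C) : 0 <= cabs2 z.
Proof. case: z => a b /=. nra. Qed.
Lemma cabs2_mul (x y : C) : cabs2 (x * y) = cabs2 x * cabs2 y.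
Proof. case: x => a b; case: y => c d /=. ring. Qed.
Lemma cabs2_add_lb (x y : C) : cabs2 x / 2 - cabs2 y <= cabs2 (x + y).
Proof. case: x => a b; case: y => c d /=. have := sqr_ge0 (a + 2*c); have := sqr_ge0 (b + 2*d). nra. Qed.
Lemma cabs2_conj (x : C) : cabs2 (conjc x) = cabs2 x.
Proof. case: x => a b /=. ring. Qed.
Lemma cabs2_0 : cabs2 (0 : C) = 0.
Proof. rewrite /=. ring. Qed.

Definition uc (phi : R) : C := cR (cos phi).
Definition uij (phi alpha : R) : C := - (cexpi alpha * cR (sin phi)).
Definition uji (phi alpha : R) : C := cexpi (- alpha) * cR (sin phi).

Lemma P1 phi alpha (x y : C) :
  cabs2 (x * uc phi + y * uji phi alpha) + cabs2 (x * uij phi alpha + y * uc phi)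
  = cabs2 x + cabs2 y.
Proof.
rewrite /uc /uji /uij /cexpi /cR sinN cosN.
have h1 := cos2Dsin2 phi; have h2 := cos2Dsin2 alpha.
move: (cos phi) (sin phi) (cos alpha) (sin alpha) h1 h2 => c s ca sa h1 h2.
case: x => a b; case: y => e f /=.
transitivity ((a^+2+b^+2+(e^+2+f^+2))*(c^+2 + s^+2*(ca^+2+sa^+2))); first by ring.
by rewrite h2 mulr1 h1 mulr1.
Qed.

Lemma P2 phi alpha (x y : C) :
  cabs2 (conjc (uc phi) * x + conjc (uji phi alpha) * y)
  + cabs2 (conjc (uij phi alpha) * x + conjc (uc phi) * y)
  = cabs2 x + cabs2 y.
Proof.
rewrite /uc /uji /uij /cexpi /cR sinN cosN.
have h1 := cos2Dsin2 phi; have h2 := cos2Dsin2 alpha.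
move: (cos phi) (sin phi) (cos alpha) (sin alpha) h1 h2 => c s ca sa h1 h2.
case: x => a b; case: y => e f /=.
transitivity ((a^+2+b^+2+(e^+2+f^+2))*(c^+2 + s^+2*(ca^+2+sa^+2))); first by ring.
by rewrite h2 mulr1 h1 mulr1.
Qed.

Lemma cabs2_uc phi : cabs2 (uc phi) = cos phi ^+ 2.
Proof. rewrite /uc /cR /=. ring. Qed.
Lemma cabs2_uij phi alpha : cabs2 (uij phi alpha) <= 1.
Proof.
rewrite /uij /cexpi /cR /=.
have h1 := cos2Dsin2 phi; have h2 := cos2Dsin2 alpha.
move: (cos phi) (sin phi) (cos alpha) (sin alpha) h1 h2 => c s ca sa h1 h2.
have -> : (- (ca * s - sa * 0)) ^+ 2 + (- (ca * 0 + sa * s)) ^+ 2 = s^+2 * (ca^+2+sa^+2) by ring.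
rewrite h2 mulr1. nra.
Qed.

Lemma sumD1n (V : zmodType) k (P : pred nat) (F : nat -> V) i : (i < k)%N -> P i ->
  \sum_(0 <= r < k | P r) F r = F i + \sum_(0 <= r < k | P r && (r != i)) F r.
Proof.
move=> ik Pi.
rewrite big_mkcond (bigD1_seq i) ?mem_index_iota ?iota_uniq //= Pi.
congr (_ + _); rewrite [RHS]big_mkcond /= big_mkcond /=.
by apply: eq_bigr => r _; case: (P r); case: (r != i).
Qed.

Lemma sumD2n (V : zmodType) k (P : pred nat) (F : nat -> V) i j : (i < k)%N -> (j < k)%N -> i != j -> P i -> P j ->
  \sum_(0 <= r < k | P r) F r = F i + F j + \sum_(0 <= r < k | P r && (r != i) && (r != j)) F r.
Proof.
move=> ik jk ij Pi Pj.
rewrite (sumD1n _ ik Pi) (sumD1n _ jk) /=; last by rewrite Pj eq_sym.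
by rewrite addrA.
Qed.

Lemma sumD2n0 (V : zmodType) k (F : nat -> V) i j : (i < k)%N -> (j < k)%N -> i != j ->
  \sum_(0 <= r < k) F r = F i + F j + \sum_(0 <= r < k | (r != i) && (r != j)) F r.
Proof.
move=> ik jk ij.
rewrite (bigD1_seq i) ?mem_index_iota ?iota_uniq //=.
by rewrite (@sumD1n V k (fun r => r != i) F j jk) 1?eq_sym // addrA.
Qed.

Lemma sum_delta k (P : pred nat) (F : nat -> C) s :
  \sum_(0 <= q < k | P q) F q * (q == s)%:R = if (s < k)%N && P s then F s else 0.
Proof.
case: (ltnP s k) => sk /=.
  rewrite big_mkcond (bigD1_seq s) ?mem_index_iota ?iota_uniq //= eqxx mulr1.
  rewrite big1 ?addr0; first by case: (P s).
  by move=> q /negbTE ->; rewrite mulr0; case: (P q).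
rewrite big_nat_cond big1 // => q /andP[/andP[_ qk] _].
have /negbTE -> : q != s by apply/eqP => qs; move: qk; rewrite qs ltnNge sk.
by rewrite mulr0.
Qed.

End Aux.

Section Step.
Variable R : realType.
Variable n : nat.
Local Notation C := (complex R).
Local Notation E M r s := (M (@inord n r) (@inord n s)).

Lemma inord_eqE a b : (a < n.+1)%N -> (b < n.+1)%N -> (@inord n a == @inord n b) = (a == b).
Proof. by move=> ha hb; rewrite -val_eqE /= !inordK. Qed.

Lemma rotE i j (phi alpha : R) a b : (a < n.+1)%N -> (b < n.+1)%N ->
  E (Defs.rot n.+1 i j phi alpha) a b =
  if a == b then (if (a == i) || (a == j) then uc phi else 1)
  else if (a == i) && (b == j) then uij phi alpha
  else if (a == j) && (b == i) then uji phi alpha else 0.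
Proof. by move=> ha hb; rewrite mxE inord_eqE // !inordK. Qed.

Section Fixed.
Variables (i j : nat) (phi alpha : R).
Hypothesis ij : (i < j)%N.
Hypothesis jn : (j < n.+1)%N.
Let U := Defs.rot n.+1 i j phi alpha.
Lemma in_ : (i < n.+1)%N. Proof. exact: ltn_trans ij jn. Qed.
Lemma nij : i != j. Proof. by rewrite neq_ltn ij. Qed.
Lemma nji : j != i. Proof. by rewrite eq_sym nij. Qed.

Lemma Uii : E U i i = uc phi. Proof. by rewrite rotE ?in_ // !eqxx. Qed.
Lemma Ujj : E U j j = uc phi. Proof. by rewrite rotE // !eqxx orbT. Qed.
Lemma Uij : E U i j = uij phi alpha. Proof. by rewrite rotE ?in_ // (negbTE nij) !eqxx. Qed.
Lemma Uji : E U j i = uji phi alpha.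
Proof. by rewrite rotE ?in_ // (negbTE nji) !eqxx. Qed.
Lemma Uio b : (b < n.+1)%N -> b != i -> b != j -> E U i b = 0.
Proof.
move=> hb bi bj; rewrite rotE ?in_ // eq_sym (negbTE bi) eqxx (negbTE bj) /=.
by rewrite (negbTE nij).
Qed.
Lemma Ujo b : (b < n.+1)%N -> b != i -> b != j -> E U j b = 0.
Proof.
move=> hb bi bj; rewrite rotE ?in_ // eq_sym (negbTE bj) (negbTE nji) (negbTE bi) /=.
by rewrite andbF.
Qed.
Lemma Uo a b : (a < n.+1)%N -> (b < n.+1)%N -> a != i -> a != j -> E U a b = (a == b)%:R.
Proof.
move=> ha hb ai aj; rewrite rotE // (negbTE ai) (negbTE aj) /=.
by case: (a == b).
Qed.

Lemma sumU (G : nat -> C) (F : nat -> C) s : (s < n.+1)%N ->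
  (forall q, (q < n.+1)%N -> q != i -> q != j -> F q = (q == s)%:R) ->
  \sum_(0 <= q < n.+1) G q * F q =
  G i * F i + G j * F j + (if (s != i) && (s != j) then G s else 0).
Proof.
move=> hs hF.
rewrite (sumD2n0 _ in_ jn nij).
congr (_ + _).
rewrite big_nat_cond (eq_bigr (fun q => G q * (q == s)%:R)); last first.
  by move=> q /and3P[/andP[_ hq] qi qj]; rewrite hF.
rewrite -big_nat_cond sum_delta hs /=.
done.
Qed.

Lemma mulU (M : 'M[C]_n.+1) r s : (r < n.+1)%N -> (s < n.+1)%N ->
  E (M *m U) r s = E M r i * E U i s + E M r j * E U j s +
    (if (s != i) && (s != j) then E M r s else 0).
Proof.
move=> hr hs; rewrite mxE big_mknat.
rewrite (@sumU (fun q => E M r q) (fun q => E U q s) s) //.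
by move=> q hq qi qj; rewrite Uo.
Qed.

Lemma Umul (M : 'M[C]_n.+1) r s : (r < n.+1)%N -> (s < n.+1)%N ->
  E (ctrmx U *m M) r s = conjc (E U i r) * E M i s + conjc (E U j r) * E M j s +
    (if (r != i) && (r != j) then E M r s else 0).
Proof.
move=> hr hs; rewrite mxE big_mknat.
rewrite (eq_bigr (fun q => E M q s * conjc (E U q r))); last first.
  by move=> q _; rewrite !mxE mulrC.
rewrite (@sumU (fun q => E M q s) (fun q => conjc (E U q r)) r) //; last first.
  by move=> q hq qi qj; rewrite Uo // rmorph_nat.
by rewrite ![E M _ s * _]mulrC.
Qed.

Variable M : 'M[C]_n.+1.
Let M' := ctrmx U *m M *m U.

Lemma M'E r s : (r < n.+1)%N -> (s < n.+1)%N ->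
  E M' r s = conjc (E U i r) * E (M *m U) i s + conjc (E U j r) * E (M *m U) j s +
    (if (r != i) && (r != j) then E (M *m U) r s else 0).
Proof. by move=> hr hs; rewrite /M' -mulmxA Umul. Qed.

Lemma F1 r s : (r < n.+1)%N -> (s < n.+1)%N -> r != i -> r != j -> s != i -> s != j ->
  E M' r s = E M r s.
Proof.
move=> hr hs ri rj si sj.
rewrite M'E // Uio // Ujo // rmorph0 !mul0r !add0r ri rj /=.
by rewrite mulU // Uio // Ujo // !mulr0 !add0r si sj.
Qed.

Lemma F2i r : (r < n.+1)%N -> r != i -> r != j ->
  E M' r i = E M r i * uc phi + E M r j * uji phi alpha.
Proof.
move=> hr ri rj.
rewrite M'E ?in_ // Uio // Ujo // rmorph0 !mul0r !add0r ri rj /=.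
by rewrite mulU ?in_ // eqxx /= addr0 Uii Uji.
Qed.

Lemma F2j r : (r < n.+1)%N -> r != i -> r != j ->
  E M' r j = E M r i * uij phi alpha + E M r j * uc phi.
Proof.
move=> hr ri rj.
rewrite M'E ?in_ // Uio // Ujo // rmorph0 !mul0r !add0r ri rj /=.
by rewrite mulU ?in_ // eqxx andbF addr0 Uij Ujj.
Qed.

Lemma F3i s : (s < n.+1)%N -> s != i -> s != j ->
  E M' i s = conjc (uc phi) * E M i s + conjc (uji phi alpha) * E M j s.
Proof.
move=> hs si sj.
rewrite M'E ?in_ // (_ : (i != i) && _ = false) ?eqxx // addr0 Uii Uji.
by rewrite !mulU ?in_ // Uio // Ujo // !mulr0 !add0r si sj.
Qed.

Lemma F3j s : (s < n.+1)%N -> s != i -> s != j ->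
  E M' j s = conjc (uij phi alpha) * E M i s + conjc (uc phi) * E M j s.
Proof.
move=> hs si sj.
rewrite M'E ?in_ // (_ : (j != i) && _ = false) ?eqxx ?andbF // addr0 Uij Ujj.
by rewrite !mulU ?in_ // Uio // Ujo // !mulr0 !add0r si sj.
Qed.

Lemma recur r : (r < n.+1)%N -> r != i -> r != j ->
  cos phi ^+ 2 / 2 * cabs2 (E M r j) - cabs2 (E M r i) <= cabs2 (E M' r j).
Proof.
move=> hr ri rj.
apply: le_trans (_ : _ <= cabs2 (E M r j * uc phi) / 2 - cabs2 (E M r i * uij phi alpha)) _; last first.
  by rewrite F2j // [X in _ <= cabs2 X]addrC; apply: cabs2_add_lb.
rewrite !cabs2_mul cabs2_uc.
have h1 := cabs2_uij phi alpha; have h2 := cabs2_ge0 (E M r i).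
have h3 := cabs2_ge0 (E M r j).
have h4 : cabs2 (E M r i) * cabs2 (uij phi alpha) <= cabs2 (E M r i) by rewrite ler_piMr.
nra.
Qed.

Definition Off k (X : 'M[C]_n.+1) :=
  \sum_(0 <= r < k) \sum_(0 <= s < k | r != s) cabs2 (E X r s).
Definition Col k c (X : 'M[C]_n.+1) := \sum_(0 <= r < k) cabs2 (E X r c).

Hypothesis hz1 : E M' i j = 0.
Hypothesis hz2 : E M' j i = 0.

Lemma Off_step k : (j < k)%N -> (k <= n.+1)%N ->
  Off k M' = Off k M - cabs2 (E M i j) - cabs2 (E M j i).
Proof.
move=> jk kn; have ik : (i < k)%N by apply: ltn_trans ij jk.
rewrite /Off (sumD2n0 _ ik jk nij) (sumD2n0 _ ik jk nij).
have rest : \sum_(0 <= r < k | (r != i) && (r != j))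
     \sum_(0 <= s < k | r != s) cabs2 (E M' r s) =
   \sum_(0 <= r < k | (r != i) && (r != j))
     \sum_(0 <= s < k | r != s) cabs2 (E M r s).
  rewrite big_nat_cond [RHS]big_nat_cond; apply: eq_bigr => r /and3P[/andP[_ hr] ri rj].
  have hr' : (r < n.+1)%N by apply: leq_trans hr kn.
  rewrite (@sumD2n _ k (fun s => r != s) _ i j ik jk nij ri rj).
  rewrite [RHS](@sumD2n _ k (fun s => r != s) _ i j ik jk nij ri rj).
  rewrite F2i // F2j // P1; congr (_ + _).
  rewrite big_nat_cond [RHS]big_nat_cond; apply: eq_bigr => s /andP[/andP[_ hs] /andP[/andP[_ si] sj]].
  by rewrite F1 // (leq_trans hs kn).
rewrite rest.
rewrite (@sumD1n _ k (fun s => i != s) _ j jk nij) (@sumD1n _ k (fun s => j != s) _ i ik nji).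
rewrite (@sumD1n _ k (fun s => i != s) _ j jk nij) (@sumD1n _ k (fun s => j != s) _ i ik nji).
rewrite hz1 hz2 cabs2_0 !add0r.
have pred_eq : \sum_(0 <= s < k | (j != s) && (s != i)) cabs2 (E M' j s) =
  \sum_(0 <= s < k | (s != i) && (s != j)) cabs2 (E M' j s).
  by apply: eq_bigl => s; rewrite (eq_sym j) andbC.
have pred_eq2 : \sum_(0 <= s < k | (j != s) && (s != i)) cabs2 (E M j s) =
  \sum_(0 <= s < k | (s != i) && (s != j)) cabs2 (E M j s).
  by apply: eq_bigl => s; rewrite (eq_sym j) andbC.
have pred_eq3 : forall X : 'M[C]_n.+1, \sum_(0 <= s < k | (i != s) && (s != j)) cabs2 (E X i s) =
  \sum_(0 <= s < k | (s != i) && (s != j)) cabs2 (E X i s).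
  by move=> X; apply: eq_bigl => s; rewrite (eq_sym i).
rewrite pred_eq pred_eq2 !pred_eq3.
have pair : \sum_(0 <= s < k | (s != i) && (s != j)) cabs2 (E M' i s) +
   \sum_(0 <= s < k | (s != i) && (s != j)) cabs2 (E M' j s) =
   \sum_(0 <= s < k | (s != i) && (s != j)) cabs2 (E M i s) +
   \sum_(0 <= s < k | (s != i) && (s != j)) cabs2 (E M j s).
  rewrite -!big_split /= big_nat_cond [RHS]big_nat_cond.
  apply: eq_bigr => s /andP[/andP[_ hs] /andP[si sj]].
  have hs' : (s < n.+1)%N by apply: leq_trans hs kn.
  by rewrite F3i // F3j // P2.
lra.
Qed.

Lemma Col_step k c : (j < k)%N -> (k <= c)%N -> (c < n.+1)%N ->
  Col k c M' = Col k c M.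
Proof.
move=> jk kc cn; have ik : (i < k)%N by apply: ltn_trans ij jk.
have ci : c != i by rewrite neq_ltn (leq_trans ik kc) orbT.
have cj : c != j by rewrite neq_ltn (leq_trans jk kc) orbT.
rewrite /Col (sumD2n0 _ ik jk nij) (sumD2n0 _ ik jk nij).
rewrite F3i // F3j // P2; congr (_ + _).
rewrite big_nat_cond [RHS]big_nat_cond; apply: eq_bigr => r /andP[/andP[_ hr] /andP[ri rj]].
by rewrite F1 // (ltn_trans hr (leq_ltn_trans kc cn)).
Qed.

End Fixed.
End Step.


Definition Tn (j : nat) := (j * j.+1)./2.

Lemma TnS j : Tn j.+1 = (Tn j + j.+1)%N.
Proof.
rewrite /Tn -!divn2.
have -> : (j.+1 * j.+2 = j * j.+1 + j.+1 * 2)%N by ring.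
by rewrite divnDr ?dvdn_mull // mulnK.
Qed.

Lemma Tn_mono j1 j2 : (j1 <= j2)%N -> (Tn j1 <= Tn j2)%N.
Proof.
elim: j2 => [|j2 IH]; first by rewrite leqn0 => /eqP ->.
rewrite leq_eqVlt => /orP[/eqP -> //| h].
by rewrite TnS (leq_trans (IH h)) // leq_addr.
Qed.

Lemma decomp m k : (k < Tn m)%N -> exists j t, [/\ (j < m)%N, (t <= j)%N & k = (Tn j + t)%N].
Proof.
elim: m k => [|m IH] k; first by [].
rewrite TnS => hk.
case: (ltnP k (Tn m)) => h.
  by case: (IH k h) => j [t [h1 h2 h3]]; exists j, t; split => //; apply: ltnW.
exists m, (k - Tn m)%N; split => //; [lia| lia].
Qed.

Definition colf (tau : forall j : nat, 'S_j) (k : nat) : seq (nat * nat) :=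
  [seq ((tau k i : nat), k) | i <- enum 'I_k].

Lemma size_colf tau k : size (colf tau k) = k.
Proof. by rewrite size_map size_enum_ord. Qed.

Lemma size_prefix tau j : size (flatten [seq colf tau k | k <- iota 1 j]) = Tn j.
Proof.
elim: j => [|j IH]; first by [].
have -> : iota 1 j.+1 = iota 1 j ++ [:: j.+1] by rewrite -(addn1 j) iotaD /= add1n addn1.
rewrite map_cat flatten_cat size_cat IH TnS; congr (_ + _)%N; by rewrite /= cats0 size_colf.
Qed.

Lemma nth_ord n tau j t : (j.+1 < n)%N -> (t <= j)%N ->
  nth (0%N, 0%N) (colperm_ordering n tau) (Tn j + t) = ((tau j.+1 (inord t) : nat), j.+1).
Proof.
move=> jn tj.
rewrite /colperm_ordering.
have -> : n.-1 = (j + (n.-1 - j).-1.+1)%N by lia.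
rewrite iotaD map_cat flatten_cat.
rewrite -/(colf tau) (_ : [seq colf tau k | k <- iota 1 j] = [seq colf tau k | k <- iota 1 j]) //.
rewrite nth_cat size_prefix ltnNge leq_addr /= addKn.
rewrite add1n /= nth_cat size_colf ltnS tj.
rewrite /colf (nth_map ord0) ?size_enum_ord ?ltnS //.
congr (_, _); congr (nat_of_ord (tau _ _)).
by apply: val_inj; rewrite /= nth_enum_ord ?inordK ?ltnS.
Qed.

Section Alg.
Variable R : realType.

Definition kap (nu : R) : R := Num.min (nu ^+ 2) 1 / 2.

Lemma kap_gt0 nu : 0 < nu -> 0 < kap nu.
Proof.
move=> h; rewrite /kap divr_gt0 // lt_min ltr01 andbT.
by rewrite exprn_gt0.
Qed.

Lemma kap_le1 nu : kap nu <= 1.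
Proof.
rewrite /kap; have : Num.min (nu ^+ 2) 1 <= 1 by rewrite ge_min lexx orbT.
lra.
Qed.

Lemma kap_cos nu (c : R) : 0 < nu -> nu <= `|c| -> kap nu <= c ^+ 2 / 2.
Proof.
move=> h1 h2; rewrite /kap.
have h3 : nu ^+ 2 <= c ^+ 2.
  rewrite -(real_normK (num_real c)).
  have h0 : 0 <= `|c| by [].
  nra.
have : Num.min (nu ^+ 2) 1 <= c ^+ 2 by rewrite ge_min h3.
lra.
Qed.

Fixpoint gam (nu : R) (j : nat) : R :=
  match j with 0%N => 0 | j'.+1 => 1 - (1 - gam nu j') ^+ 2 * kap nu ^+ j'.+1 / 2 end.

Lemma gam_bnd nu j : 0 < nu -> 0 <= gam nu j /\ gam nu j < 1.
Proof.
move=> hnu; elim: j => [|j [IH1 IH2]] /=; first by split; [exact: lexx| exact: ltr01].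
have hk0 : 0 < kap nu ^+ j.+1 by rewrite exprn_gt0 // kap_gt0.
have hk1 : kap nu ^+ j.+1 <= 1 by rewrite exprn_ile1 ?kap_le1 // ltW // kap_gt0.
have h2 : 0 < (1 - gam nu j) ^+ 2 by rewrite exprn_gt0 // subr_gt0.
have h3 : (1 - gam nu j) ^+ 2 <= 1 by apply: exprn_ile1; lra.
have h4 : 0 < (1 - gam nu j) ^+ 2 * kap nu ^+ j.+1 by rewrite mulr_gt0.
have h5 : (1 - gam nu j) ^+ 2 * kap nu ^+ j.+1 <= 1 by rewrite mulr_ile1 // ltW.
split; lra.
Qed.

Lemma alg_step (g q X Y X' S : R) :
  0 <= g -> g < 1 -> 0 < q -> q <= 1 -> 0 <= X -> 0 <= Y -> 0 <= X' -> 0 <= S ->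
  X' <= g * X -> q * Y - X' <= S ->
  X' + 2 * Y - 2 * S <= (1 - (1 - g) ^+ 2 * q / 2) * (X + 2 * Y).
Proof.
move=> g0 g1 q0 q1 X0 Y0 X'0 S0 hX hS.
have e1 : (1 - g) * (q * Y - X') <= 2 * S.
  case: (lerP 0 (q * Y - X')) => h.
    have : (1 - g) * (q * Y - X') <= q * Y - X'.
      by rewrite -[X in _ <= X]mul1r; apply: ler_wpM2r => //; lra.
    lra.
  have : (1 - g) * (q * Y - X') <= 0 by rewrite pmulr_rle0 ?subr_gt0 // ltW.
  lra.
have e2 : X' * (2 - g) <= g * X * (2 - g) by apply: ler_wpM2r => //; lra.
have e3 : 0 <= X * ((1 - g) ^+ 2 * (1 - q / 2)).
  by apply: mulr_ge0 => //; apply: mulr_ge0; [exact: sqr_ge0| lra].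
have e4 : 0 <= Y * (q * (1 - g) * g).
  by apply: mulr_ge0 => //; apply: mulr_ge0 => //; apply: mulr_ge0; lra.
nra.
Qed.
End Alg.

Section Herm.
Variable R : realType.
Local Notation C := (complex R).

Lemma ctrmxM m (X Y : 'M[C]_m) : ctrmx (X *m Y) = ctrmx Y *m ctrmx X.
Proof. by rewrite /ctrmx map_mxM trmx_mul. Qed.
Lemma ctrmxK m (X : 'M[C]_m) : ctrmx (ctrmx X) = X.
Proof. by apply/matrixP => r s; rewrite !mxE conjcK. Qed.
Lemma herm_step m (U M : 'M[C]_m) : is_hermitian M -> is_hermitian (ctrmx U *m M *m U).
Proof. by rewrite /is_hermitian => hM; rewrite !ctrmxM ctrmxK hM mulmxA. Qed.
Lemma herm_conj m (M : 'M[C]_m) r s : is_hermitian M -> M s r = conjc (M r s).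
Proof. by move=> hM; rewrite -{1}hM !mxE. Qed.
End Herm.

Section Main.
Variable R : realType.
Variable n : nat.
Local Notation C := (complex R).
Local Notation E M r s := (M (@inord n r) (@inord n s)).
Variables (A : 'M[C]_n.+1) (tau : forall j : nat, 'S_j) (phi alpha : nat -> R)
  (As : nat -> 'M[C]_n.+1) (nu : R).
Hypothesis hA : is_hermitian A.
Hypothesis hJ : jacobi_cycle (colperm_ordering n.+1 tau) A phi alpha As.
Hypothesis hnu : 0 < nu.
Hypothesis hcos : forall k, (k < Tn n)%N -> nu <= `|cos (phi k)|.

Definition sg j t : nat := tau j.+1 (inord t).

Lemma NE : ((n.+1 * n.+1.-1)./2 = Tn n)%N.
Proof. by rewrite /Tn mulnC. Qed.

Lemma sg_lt j t : (sg j t < j.+1)%N.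
Proof. exact: ltn_ord. Qed.

Lemma sg_inj j t1 t2 : (t1 <= j)%N -> (t2 <= j)%N -> sg j t1 = sg j t2 -> t1 = t2.
Proof.
move=> h1 h2 /val_inj /perm_inj /(congr1 val).
by rewrite /= !inordK.
Qed.

Lemma sg_inj' j t1 t2 : sg j t1 = sg j t2 -> (t1 <= j)%N -> (t2 <= j)%N -> t1 = t2.
Proof. by move=> e h1 h2; apply: (sg_inj h1 h2 e). Qed.

Lemma k_lt j t : (j < n)%N -> (t <= j)%N -> (Tn j + t < Tn n)%N.
Proof.
move=> hj ht; apply: (@leq_trans (Tn j.+1)); last exact: Tn_mono.
by rewrite TnS ltn_add2l.
Qed.

Lemma stepE j t : (j < n)%N -> (t <= j)%N ->
  As (Tn j + t).+1 = ctrmx (Defs.rot n.+1 (sg j t) j.+1 (phi (Tn j + t)) (alpha (Tn j + t)))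
     *m As (Tn j + t) *m Defs.rot n.+1 (sg j t) j.+1 (phi (Tn j + t)) (alpha (Tn j + t))
  /\ E (As (Tn j + t).+1) (sg j t) j.+1 = 0.
Proof.
move=> hj ht; case: hJ => _ h.
have hk := k_lt hj ht; rewrite -NE in hk.
move: (h _ hk); rewrite modn_small // nth_ord //= => -[e z].
split; first exact: e.
apply: z; rewrite inordK //.
  exact: ltn_trans (sg_lt j t) _.
Qed.

Lemma herm k : (k <= Tn n)%N -> is_hermitian (As k).
Proof.
elim: k => [|k IH] hk; first by case: hJ => -> _.
have [j [t [hj ht ek]]] := decomp hk; subst k.
have [e _] := stepE hj ht.
by rewrite e; apply: herm_step; apply: IH; apply: ltnW.
Qed.

Lemma herm_zero j t : (j < n)%N -> (t <= j)%N ->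
  E (As (Tn j + t).+1) j.+1 (sg j t) = 0.
Proof.
move=> hj ht; have [_ z] := stepE hj ht.
by rewrite (herm_conj _ _ (herm (k_lt hj ht))) z rmorph0.
Qed.

Lemma step_off j t K : (j < n)%N -> (t <= j)%N -> (j.+1 < K)%N -> (K <= n.+1)%N ->
  Off K (As (Tn j + t).+1) = Off K (As (Tn j + t)) - 2 * cabs2 (E (As (Tn j + t)) (sg j t) j.+1).
Proof.
move=> hj ht h1 h2.
have [e z] := stepE hj ht; have z2 := herm_zero hj ht.
rewrite e in z z2 *.
rewrite (Off_step (sg_lt j t) _ z z2 h1 h2) //.
rewrite (herm_conj _ _ (herm _)) ?cabs2_conj; last exact: ltnW (k_lt hj ht).
ring.
Qed.

Lemma step_col j t K c : (j < n)%N -> (t <= j)%N -> (j.+1 < K)%N -> (K <= c)%N -> (c < n.+1)%N ->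
  Col K c (As (Tn j + t).+1) = Col K c (As (Tn j + t)).
Proof.
move=> hj ht h1 h2 h3.
have [e _] := stepE hj ht; rewrite e.
exact: (Col_step _ _ (sg_lt j t)).
Qed.

Lemma step_F1 j t r s : (j < n)%N -> (t <= j)%N -> (r < n.+1)%N -> (s < n.+1)%N ->
  r != sg j t -> r != j.+1 -> s != sg j t -> s != j.+1 ->
  E (As (Tn j + t).+1) r s = E (As (Tn j + t)) r s.
Proof.
move=> hj ht hr hs r1 r2 s1 s2.
have [e _] := stepE hj ht; rewrite e.
exact: (F1 _ _ (sg_lt j t)).
Qed.

Lemma step_rec j t r : (j < n)%N -> (t <= j)%N -> (r < n.+1)%N ->
  r != sg j t -> r != j.+1 ->
  kap nu * cabs2 (E (As (Tn j + t)) r j.+1) - cabs2 (E (As (Tn j + t)) r (sg j t))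
  <= cabs2 (E (As (Tn j + t).+1) r j.+1).
Proof.
move=> hj ht hr r1 r2.
have [e _] := stepE hj ht; rewrite e.
apply: le_trans (recur _ _ (sg_lt j t) _ _ hr r1 r2); last by [].
have hk := kap_cos hnu (hcos (k_lt hj ht)).
have h0 := cabs2_ge0 (E (As (Tn j + t)) r j.+1).
by rewrite lerD2r; apply: ler_wpM2r.
Qed.

Lemma Off_succ (M : 'M[C]_n.+1) J : is_hermitian M -> (J < n.+1)%N ->
  Off J.+1 M = Off J M + 2 * Col J J M.
Proof.
move=> hM hJn; rewrite /Off /Col big_nat_recr //=.
have inner : forall r, (0 <= r < J)%N ->
    \sum_(0 <= s < J.+1 | r != s) cabs2 (E M r s)
    = \sum_(0 <= s < J | r != s) cabs2 (E M r s) + cabs2 (E M r J).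
  move=> r /andP[_ hr]; rewrite big_mkcond big_nat_recr //= -big_mkcond /=.
  by rewrite (ltn_eqF hr).
have last : \sum_(0 <= s < J.+1 | J != s) cabs2 (E M J s)
    = \sum_(0 <= s < J) cabs2 (E M s J).
  rewrite big_mkcond big_nat_recr //= eqxx /= addr0.
  apply: eq_big_nat => s hs.
  have hsJ : (s < J)%N by case/andP: hs.
  by rewrite eq_sym (ltn_eqF hsJ) /= (herm_conj _ _ hM) cabs2_conj.
rewrite last (eq_big_nat _ _ inner) big_split /=.
lra.
Qed.

Lemma Off1 (M : 'M[C]_n.+1) : Off 1 M = 0.
Proof. by rewrite /Off big_nat1 big_mkcond big_nat1 eqxx. Qed.

Lemma Off_ge0 k (M : 'M[C]_n.+1) : 0 <= Off k M.
Proof. by apply: sumr_ge0 => r _; apply: sumr_ge0 => s _; apply: cabs2_ge0. Qed.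
Lemma Col_ge0 k c (M : 'M[C]_n.+1) : 0 <= Col k c M.
Proof. by apply: sumr_ge0 => r _; apply: cabs2_ge0. Qed.

Section Phase.
Variable j : nat.
Hypothesis hj : (j < n)%N.

Lemma ltJn m : (m < j.+1)%N -> (m < n.+1)%N.
Proof. move=> h; lia. Qed.
Lemma neqJ m : (m < j.+1)%N -> m != j.+1.
Proof. by move=> h; rewrite (ltn_eqF h). Qed.

Lemma untouched m q t0 : (m < j.+1)%N -> (q < j.+1)%N -> (t0 <= j.+1)%N ->
  (forall t', (t' < t0)%N -> (sg j t' != m) && (sg j t' != q)) ->
  E (As (Tn j + t0)) m q = E (As (Tn j)) m q.
Proof.
move=> hm hq; elim: t0 => [|t0 IH] ht H; first by rewrite addn0.
have /andP[h1 h2] := H t0 (ltnSn t0).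
rewrite eq_sym in h1; rewrite eq_sym in h2.
rewrite addnS (step_F1 hj ht (ltJn hm) (ltJn hq) h1 (neqJ hm) h2 (neqJ hq)).
apply: IH; first exact: ltnW.
by move=> t' ht'; apply: H; apply: ltnW.
Qed.

Lemma rec_lb m t0 : (m < j.+1)%N -> (t0 <= j.+1)%N ->
  (forall t', (t' < t0)%N -> sg j t' != m) ->
  kap nu ^+ t0 * cabs2 (E (As (Tn j)) m j.+1)
    - \sum_(0 <= t' < t0) cabs2 (E (As (Tn j)) m (sg j t'))
  <= cabs2 (E (As (Tn j + t0)) m j.+1).
Proof.
move=> hm; elim: t0 => [|t0 IH] ht H.
  by rewrite big_geq // subr0 expr0 mul1r addn0.
have IH' := IH (ltnW ht) (fun t' h => H t' (ltnW h)).
have hm1 : m != sg j t0 by rewrite eq_sym; apply: H.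
have hs := step_rec hj ht (ltJn hm) hm1 (neqJ hm).
rewrite (untouched hm (sg_lt j t0) (ltnW ht)) in hs; last first.
  move=> t' ht'; rewrite H /=; last exact: ltnW.
  apply/eqP => e.
  move: (sg_inj' e) => h. have h' : t' = t0 by apply: h; lia.
  lia.
rewrite addnS big_nat_recr //= exprS.
set X := cabs2 (E (As (Tn j + t0)) m j.+1) in IH' hs.
set Y := cabs2 (E (As (Tn j)) m j.+1) in IH' *.
set S := \sum_(0 <= i < t0) cabs2 (E (As (Tn j)) m (sg j i)) in IH' *.
have k0 : 0 <= kap nu by apply: ltW; apply: kap_gt0.
have k1 := kap_le1 nu.
have S0 : 0 <= S by apply: sumr_ge0 => i _; apply: cabs2_ge0.
have p1 : kap nu * (kap nu ^+ t0 * Y - S) <= kap nu * X by apply: ler_wpM2l.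
have p2 : kap nu * S <= S by rewrite -[X in _ <= X]mul1r; apply: ler_wpM2r.
lra.
Qed.

Lemma piv_lb t : (t <= j)%N ->
  kap nu ^+ j.+1 * cabs2 (E (As (Tn j)) (sg j t) j.+1)
    - \sum_(0 <= t' < t) cabs2 (E (As (Tn j)) (sg j t) (sg j t'))
  <= cabs2 (E (As (Tn j + t)) (sg j t) j.+1).
Proof.
move=> ht.
have := rec_lb (sg_lt j t) (leqW ht).
have H : forall t', (t' < t)%N -> sg j t' != sg j t.
  move=> t' ht'; apply/eqP => e.
  move: (sg_inj' e) => h. have h' : t' = t by apply: h; lia.
  lia.
move=> /(_ H); apply: le_trans; rewrite lerD2r; apply: ler_wpM2r; first exact: cabs2_ge0.
apply: ler_wiXn2l; [exact: ltW (kap_gt0 hnu)| exact: kap_le1| exact: leqW].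
Qed.

Lemma off_phase t0 : (t0 <= j.+1)%N ->
  Off j.+2 (As (Tn j + t0)) = Off j.+2 (As (Tn j))
    - 2 * \sum_(0 <= t < t0) cabs2 (E (As (Tn j + t)) (sg j t) j.+1).
Proof.
elim: t0 => [|t0 IH] ht; first by rewrite big_geq // mulr0 subr0 addn0.
rewrite addnS (step_off hj ht) // IH ?(ltnW ht) // big_nat_recr //=.
ring.
Qed.

Lemma col_pre k : (k <= Tn j)%N -> Col j.+1 j.+1 (As k) = Col j.+1 j.+1 (As 0).
Proof.
elim: k => [|k IH] hk //.
have [j' [t' [hj' ht' ek]]] := decomp hk.
rewrite ek (step_col (j := j') (t := t')) -?ek ?IH //; try lia.
Qed.

Lemma sum_sg (F : nat -> R) : \sum_(0 <= t < j.+1) F (sg j t) = \sum_(0 <= r < j.+1) F r.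
Proof.
rewrite !big_mkord.
rewrite [RHS](reindex_inj (@perm_inj _ (tau j.+1))).
by apply: eq_bigr => t _; rewrite /sg inord_val.
Qed.

Lemma sum_sg_inner (H : nat -> R) t : (t < j.+1)%N ->
  \sum_(0 <= t' < j.+1 | t' != t) H (sg j t') = \sum_(0 <= s < j.+1 | s != sg j t) H s.
Proof.
move=> ht; rewrite !big_mkord.
rewrite [RHS](reindex_inj (@perm_inj _ (tau j.+1))).
apply: eq_big => [t'|t' _]; last by rewrite /sg inord_val.
rewrite /sg.
case: (eqVneq t' (inord t)) => [->|ne]; first by rewrite inordK // !eqxx.
have e1 : ((t' : nat) == t) = false.
  by apply/eqP => e; move: ne; rewrite -e inord_val eqxx.
have e2 : ((tau j.+1 t' : nat) == tau j.+1 (inord t)) = false.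
  by rewrite (inj_eq (@ord_inj _)) (inj_eq (@perm_inj _ _)) (negbTE ne).
by rewrite e1 e2.
Qed.

Lemma sum_sg2 (G : nat -> nat -> R) :
  \sum_(0 <= t < j.+1) \sum_(0 <= t' < j.+1 | t' != t) G (sg j t) (sg j t')
  = \sum_(0 <= r < j.+1) \sum_(0 <= s < j.+1 | s != r) G r s.
Proof.
rewrite -(sum_sg (fun r => \sum_(0 <= s < j.+1 | s != r) G r s)).
rewrite big_nat_cond [RHS]big_nat_cond; apply: eq_bigr => t /andP[/andP[_ ht] _].
exact: (sum_sg_inner (G (sg j t))).
Qed.

Lemma sumsub (f : nat -> R) t : (t < j.+1)%N -> (forall x, 0 <= f x) ->
  \sum_(0 <= t' < t) f t' <= \sum_(0 <= t' < j.+1 | t' != t) f t'.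
Proof.
move=> ht hf.
rewrite (big_nat_widen 0 t j.+1) ?(ltnW ht) //.
rewrite big_mkcond [X in _ <= X]big_mkcond /=.
apply: ler_sum => x _.
case: (ltngtP x t) => h //=; rewrite ?hf //.
Qed.

End Phase.
Lemma main j : (j <= n)%N -> Off j.+1 (As (Tn j)) <= gam nu j * Off j.+1 (As 0).
Proof.
elim: j => [|j IH] hj; first by rewrite !Off1 /= mul0r.
have hj' : (j < n)%N := hj.
have hT : (Tn j <= Tn n)%N by apply: Tn_mono; apply: ltnW.
have hIH := IH (ltnW hj').
set X := Off j.+1 (As 0) in hIH *.
set Y := Col j.+1 j.+1 (As 0).
set X' := Off j.+1 (As (Tn j)) in hIH *.
set S := \sum_(0 <= t < j.+1) cabs2 (E (As (Tn j + t)) (sg j t) j.+1).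
have hJn : (j.+1 < n.+1)%N by [].
have e1 : Off j.+2 (As (Tn j.+1)) = X' + 2 * Y - 2 * S.
  by rewrite TnS (off_phase hj' (leqnn _)) (Off_succ (herm hT)) // (col_pre hj' (leqnn _)).
have e2 : Off j.+2 (As 0) = X + 2 * Y by rewrite (Off_succ (herm (leq0n _))).
have hS : kap nu ^+ j.+1 * Y - X' <= S.
  have h1 : \sum_(0 <= t < j.+1) (kap nu ^+ j.+1 * cabs2 (E (As (Tn j)) (sg j t) j.+1)
       - \sum_(0 <= t' < t) cabs2 (E (As (Tn j)) (sg j t) (sg j t'))) <= S.
    rewrite /S big_nat_cond [X in _ <= X]big_nat_cond.
    by apply: ler_sum => t /andP[/andP[_ ht] _]; apply: piv_lb.
  apply: le_trans h1.
  rewrite sumrB -mulr_sumr (sum_sg j (fun r => cabs2 (E (As (Tn j)) r j.+1))).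
  rewrite -/(Col j.+1 j.+1 (As (Tn j))) (col_pre hj' (leqnn _)) -/Y.
  rewrite lerD2l lerN2.
  apply: (@le_trans _ _ (\sum_(0 <= t < j.+1) \sum_(0 <= t' < j.+1 | t' != t)
      cabs2 (E (As (Tn j)) (sg j t) (sg j t')))).
    rewrite big_nat_cond [X in _ <= X]big_nat_cond.
    apply: ler_sum => t /andP[/andP[_ ht] _].
    by apply: (@sumsub j (fun t' => cabs2 (E (As (Tn j)) (sg j t) (sg j t'))) t ht) => x; apply: cabs2_ge0.
  rewrite (sum_sg2 j (fun r s => cabs2 (E (As (Tn j)) r s))) /X' /Off.
  apply: ler_sum => r _; rewrite le_eqVlt; apply/orP; left; apply/eqP.
  by apply: eq_bigl => s; rewrite eq_sym.
rewrite e1 e2 /=.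
have [g0 g1] := gam_bnd j hnu.
apply: alg_step => //.
- by rewrite exprn_gt0 // kap_gt0.
- by rewrite exprn_ile1 // ?kap_le1 // ltW // kap_gt0.
- exact: Off_ge0.
- exact: Col_ge0.
- exact: Off_ge0.
- by apply: sumr_ge0 => t _; apply: cabs2_ge0.
Qed.

End Main.

Lemma offnorm_Off (R : realType) n (M : 'M[complex R]_n.+1) : offnorm M ^+ 2 = Off n.+1 M.
Proof.
rewrite /offnorm sqr_sqrtr; last first.
  by apply: sumr_ge0 => r _; apply: sumr_ge0 => s _; apply: cabs2_ge0.
rewrite /Off big_mknat; apply: eq_big_nat => r /andP[_ hr].
rewrite big_mknat big_nat_cond [RHS]big_nat_cond; apply: eq_bigl => s.
case hs: (s < n.+1)%N; rewrite ?andbF //=.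
by rewrite inord_eqE.
Qed.

Theorem theorem3p1 (R : realType) (n : nat) (nu : R) :
  (2 <= n)%N -> 0 < nu ->
  exists gamma : R, 0 <= gamma /\ gamma < 1 /\
    forall (A : 'M[complex R]_n) (O : seq (nat * nat))
           (phi alpha : nat -> R) (As : nat -> 'M[complex R]_n),
      is_hermitian A -> in_Cc n O ->
      jacobi_cycle O A phi alpha As ->
      (forall k : nat, (k < (n * n.-1)./2)%N -> nu <= `|cos (phi k)|) ->
      offnorm (As ((n * n.-1)./2)%N) ^+ 2 <= gamma * offnorm A ^+ 2.
Proof.
move=> hn hnu.
case: n hn => [|n'] // hn.
exists (gam nu n'); have [g0 g1] := gam_bnd n' hnu; split => //; split => //.
move=> A O phi alpha As hA [tau ->] hJ hcos.
have hcos' : forall k, (k < Tn n')%N -> nu <= `|cos (phi k)|.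
  by move=> k hk; apply: hcos; rewrite /Tn mulnC in hk.
rewrite !offnorm_Off.
have -> : ((n'.+1 * n'.+1.-1)./2 = Tn n')%N by rewrite /Tn mulnC.
have := main hA hJ hnu hcos' (leqnn n').
by case: hJ => -> _.
Qed.
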